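(* For every $n\ge1$, the following map is a bijection from $\mathrm{PST}_n$ to $\mathcal A_n$: given $t\in\mathrm{PST}_n$, delete every middle edge of $t$, delete the root of $t$ together with all edges from the root to its children, discard the isolated vertex that was the rightmost leaf of $t$, and label the remaining $n$ leaves of $t$ by $1,\dots,n$ from left to right. (The resulting components, each rooted at its topmost vertex, are binary trees forming an element of $\mathcal A_n$.)
   Context: A reduced plane tree is a rooted plane tree in which every internal node has at least two children; its weight is its number of leaves minus 1. A reduced plane tree with at least two leaves is prime if the rightmost child of its root is a leaf; $\mathrm{PST}_n$ is the set of prime reduced plane trees of weight $n$ (so with $n+1$ leaves). A middle edge of a tree is an edge from an internal vertex $v$ to a child of $v$ which is neither the leftmost nor the rightmost child of $v$. A binary tree is a plane rooted tree whose internal nodes all have exactly two children (a single leaf is allowed). A noncrossing arrangement of binary trees on $[n]$ is a set of binary trees whose leaves are labeled by $1,\dots,n$, each label used exactly once, with the leaves of each tree labeled increasingly from left to right, such that the canonical drawing (leaves placed at the points $1,\dots,n$ of a line, trees drawn above it) has no crossing, i.e. the sets of leaf labels of the trees form a noncrossing partition of $[n]$. $\mathcal A_n$ denotes the set of such arrangements. *)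

(* Defs.v *)
From HB Require Import structures.
From mathcomp Require Import all_boot.
Set Implicit Arguments. Unset Strict Implicit. Unset Printing Implicit Defensive.

Inductive tree := Leaf | Node of seq tree.

Fixpoint reduced (t : tree) : bool :=
  match t with
  | Leaf => true
  | Node ts => (2 <= size ts) && all reduced ts
  end.

Fixpoint nleaves (t : tree) : nat :=
  match t with
  | Leaf => 1
  | Node ts => sumn (map nleaves ts)
  end.

Definition weight (t : tree) : nat := (nleaves t).-1.

Definition prime_tree (t : tree) : bool :=
  (2 <= nleaves t) &&
  match t with
  | Leaf => false
  | Node ts => match ts with [::] => false | c :: cs => if last c cs is Leaf then true else false end
  end.

Definition PST (n : nat) (t : tree) : bool :=
  [&& reduced t, prime_tree t & weight t == n].

Inductive lbt := LLeaf of nat | LNode of lbt & lbt.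

Fixpoint lbt_eqb (a b : lbt) : bool :=
  match a, b with
  | LLeaf x, LLeaf y => x == y
  | LNode a1 a2, LNode b1 b2 => lbt_eqb a1 b1 && lbt_eqb a2 b2
  | _, _ => false
  end.

Lemma lbt_eqbP : Equality.axiom lbt_eqb.
Proof.
elim=> [x|a1 IH1 a2 IH2] [y|b1 b2] /=; try by constructor.
- by apply: (iffP eqP) => [->|[]].
- case: (IH1 b1) => [->|h] /=; last by constructor; case.
  by case: (IH2 b2) => [->|h]; constructor; [|case].
Qed.

HB.instance Definition _ := hasDecEq.Build lbt lbt_eqbP.

Fixpoint lleaves (b : lbt) : seq nat :=
  match b with
  | LLeaf k => [:: k]
  | LNode l r => lleaves l ++ lleaves r
  end.

Definition noncrossing (bs : seq (seq nat)) : Prop :=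
  forall B1 B2, B1 \in bs -> B2 \in bs -> B1 != B2 ->
  forall a b c d, a < b -> b < c -> c < d ->
  a \in B1 -> c \in B1 -> b \in B2 -> d \in B2 -> False.

(* A_n : noncrossing arrangements of binary trees on [n].  An arrangement
   (a set of trees) is represented by a list of trees, considered up to
   permutation (perm_eq). *)
Definition inA (n : nat) (a : seq lbt) : Prop :=
  [/\ all (fun b => sorted ltn (lleaves b)) a,
      perm_eq (flatten (map lleaves a)) (iota 1 n)
    & noncrossing (map lleaves a)].

Inductive ltree := LL of nat | LN of seq ltree.

Fixpoint lab (t : tree) (k : nat) : ltree * nat :=
  match t with
  | Leaf => (LL k, k.+1)
  | Node ts =>
    let fix labs (ts : seq tree) (k : nat) : seq ltree * nat :=
      match ts with
      | [::] => ([::], k)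
      | u :: us => let: (u', k1) := lab u k in
                   let: (us', k2) := labs us k1 in (u' :: us', k2)
      end in
    let: (ts', k') := labs ts k in (LN ts', k')
  end.

(* the component hanging from a vertex once all middle edges are deleted:
   only the edges to the leftmost and rightmost children survive *)
Fixpoint comp (t : ltree) : lbt :=
  match t with
  | LL k => LLeaf k
  | LN ts =>
    match ts with
    | [::] => LLeaf 0 (* does not occur for reduced trees *)
    | c :: cs =>
      let fix lastc (cs : seq ltree) : option lbt :=
        match cs with
        | [::] => None
        | c' :: cs' => if lastc cs' is Some b then Some b else Some (comp c')
        end in
      LNode (comp c) (if lastc cs is Some b then b else comp c)
    end
  end.

Definition middle (T : Type) (ts : seq T) : seq T :=
  drop 1 (take (size ts).-1 ts).

(* all components rooted strictly inside t at middle children (after deleting middle edges) *)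
Fixpoint cuts (t : ltree) : seq lbt :=
  match t with
  | LL _ => [::]
  | LN ts => map comp (middle ts) ++ flatten (map cuts ts)
  end.

(* the map of the theorem: label leaves 1..n+1 left to right, delete the root
   and its edges and the middle edges; discard the rightmost child of the root
   (the isolated leaf labeled n+1); collect the remaining components. *)
Definition phi (t : tree) : seq lbt :=
  match (lab t 1).1 with
  | LL _ => [::]
  | LN ts => map comp (take (size ts).-1 ts) ++ flatten (map cuts ts)
  end.

(* Main.v *)
Require Import Defs.
From mathcomp Require Import all_boot zify.
Set Implicit Arguments. Unset Strict Implicit. Unset Printing Implicit Defensive.
Notation comp := Defs.comp.
Notation middle := Defs.middle.
Notation cuts := Defs.cuts.

Definition ltree_ind' (P : ltree -> Prop) (HL : forall k, P (LL k))
  (HN : forall ts, List.Forall P ts -> P (LN ts)) : forall t, P t :=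
  fix f t := match t with
  | LL k => HL k
  | LN ts => HN ts ((fix g ts := match ts return List.Forall P ts with
       | [::] => List.Forall_nil _ | t :: ts => List.Forall_cons _ (f t) (g ts) end) ts)
  end.

Definition tree_ind' (P : tree -> Prop) (HL : P Leaf)
  (HN : forall ts, List.Forall P ts -> P (Node ts)) : forall t, P t :=
  fix f t := match t with
  | Leaf => HL
  | Node ts => HN ts ((fix g ts := match ts return List.Forall P ts with
       | [::] => List.Forall_nil _ | t :: ts => List.Forall_cons _ (f t) (g ts) end) ts)
  end.

Fixpoint lshape (u : ltree) : tree :=
  match u with LL _ => Leaf | LN ts => Node (map lshape ts) end.
Fixpoint lvs (u : ltree) : seq nat :=
  match u with LL k => [:: k] | LN ts => flatten (map lvs ts) end.
Fixpoint red (u : ltree) : bool :=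
  match u with LL _ => true | LN ts => (2 <= size ts) && all red ts end.

Fixpoint labs (ts : seq tree) (k : nat) : seq ltree * nat :=
  match ts with
  | [::] => ([::], k)
  | u :: us => let: (u', k1) := lab u k in
               let: (us', k2) := labs us k1 in (u' :: us', k2)
  end.

Lemma lab_Node ts k : lab (Node ts) k = let: (ts', k') := labs ts k in (LN ts', k').
Proof. by []. Qed.

Fixpoint lastc (cs : seq ltree) : option lbt :=
  match cs with
  | [::] => None
  | c' :: cs' => if lastc cs' is Some b then Some b else Some (comp c')
  end.

Lemma comp_LN c cs : comp (LN (c :: cs)) = LNode (comp c) (if lastc cs is Some b then b else comp c).
Proof. by []. Qed.

Lemma lastc_rcons ms d : lastc (ms ++ [:: d]) = Some (comp d).
Proof. by elim: ms => //= m ms ->. Qed.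

Lemma comp_LN2 c ms d : comp (LN (c :: ms ++ [:: d])) = LNode (comp c) (comp d).
Proof. by rewrite comp_LN lastc_rcons. Qed.

Lemma middle2 (T : Type) (c : T) ms d : middle (c :: ms ++ [:: d]) = ms.
Proof.
rewrite /middle /= size_cat /= addn1 /= take_size_cat //.
by rewrite drop0.
Qed.

Lemma cuts_LN ts : cuts (LN ts) = map comp (middle ts) ++ flatten (map cuts ts).
Proof. by []. Qed.

Lemma lvs_LN ts : lvs (LN ts) = flatten (map lvs ts).
Proof. by []. Qed.

Lemma red_split u : red u -> (exists k, u = LL k) \/
  exists c ms d, [/\ u = LN (c :: ms ++ [:: d]), red c, red d & all red ms].
Proof.
case: u => [k|ts]; first by left; exists k.
move=> /= /andP [hs ha]; right.
case: ts hs ha => [|c ts] //= hs /andP [hc ha].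
case/lastP: ts hs ha => [|ms d] //= _.
rewrite -cats1 all_cat /= andbT => /andP [hm hd].
by exists c, ms, d.
Qed.

Lemma iota_split s1 s2 a k : s1 ++ s2 = iota a k ->
  s1 = iota a (size s1) /\ s2 = iota (a + size s1) (size s2).
Proof.
move=> E; have Hk : k = size s1 + size s2 by rewrite -size_cat E size_iota.
have H1 : s1 = iota a (minn (size s1) k) by rewrite -take_iota -E take_size_cat.
have H2 : s2 = iota (a + size s1) (k - size s1) by rewrite -drop_iota -E drop_size_cat.
split; [rewrite {1}H1 | rewrite {1}H2]; congr iota; lia.
Qed.

Lemma labP t a : [/\ lshape (lab t a).1 = t, lvs (lab t a).1 = iota a (nleaves t)
  & (lab t a).2 = a + nleaves t].
Proof.
elim/tree_ind': t a => [|ts IH] a; first by rewrite /= addn1.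
rewrite lab_Node.
suff: [/\ map lshape (labs ts a).1 = ts, flatten (map lvs (labs ts a).1) = iota a (sumn (map nleaves ts))
  & (labs ts a).2 = a + sumn (map nleaves ts)].
  by case: (labs ts a) => ts' k' /= [-> -> ->].
elim: IH a => [|u us Hu Hus IHs] a; first by rewrite /= addn0.
rewrite /=; case E1: (lab u a) => [u' k1]; case E2: (labs us k1) => [us' k2] /=.
have [h1 h2 h3] := Hu a; rewrite E1 /= in h1 h2 h3.
have [g1 g2 g3] := IHs k1; rewrite E2 /= in g1 g2 g3.
rewrite h1 g1 h2 g2 g3 h3 iotaD; split => //; lia.
Qed.

Lemma lab_uniq u a : lvs u = iota a (size (lvs u)) -> lab (lshape u) a = (u, a + size (lvs u)).
Proof.
elim/ltree_ind': u a => [k|ts IH] a; first by case=> ->; rewrite /= addn1.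
move=> E; change (lab (Node (map lshape ts)) a = (LN ts, a + size (flatten (map lvs ts)))).
rewrite lab_Node.
suff -> : labs (map lshape ts) a = (ts, a + size (flatten (map lvs ts))) by [].
elim: IH a E => [|u us Hu Hus IHs] a /=; first by rewrite addn0.
move=> E; have [E1 E2] := iota_split E.
rewrite (Hu a E1) (IHs _ E2) size_cat addnA //.
Qed.

Definition Fs u := comp u :: cuts u.
Definition FsL cs := flatten (map Fs cs).
Definition lvsL (s : seq lbt) := flatten (map lleaves s).
Definition nocross (A B : seq nat) := forall a b c d, a < b -> b < c -> c < d ->
  a \in A -> c \in A -> b \in B -> d \in B -> False.
Definition ncl (s : seq lbt) := forall X Y, X \in s -> Y \in s ->
  lleaves X != lleaves Y -> nocross (lleaves X) (lleaves Y).
Definition within (X : lbt) lo hi := forall x, x \in lleaves X -> lo <= x < hi.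

Lemma lvsL_cat s1 s2 : lvsL (s1 ++ s2) = lvsL s1 ++ lvsL s2.
Proof. by rewrite /lvsL map_cat flatten_cat. Qed.

Lemma lvsL_perm s t : perm_eq s t -> perm_eq (lvsL s) (lvsL t).
Proof. by move=> h; apply: perm_flatten; apply: perm_map. Qed.

Lemma lleaves_ne b : 0 < size (lleaves b).
Proof. by elim: b => //= l IHl r _; rewrite size_cat; lia. Qed.

Lemma lvs_ne u : red u -> 0 < size (lvs u).
Proof.
elim/ltree_ind': u => // ts IH /= /andP [hs ha].
case: ts IH hs ha => [|t ts] //= IH _ /andP [ht _].
inversion IH; subst; rewrite size_cat; have := H1 ht; lia.
Qed.

Lemma within_weak X l h l' h' : within X l h -> l' <= l -> h <= h' -> within X l' h'.
Proof. by move=> W h1 h2 x /W; lia. Qed.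

Lemma sep X Y l1 h1 l2 h2 : within X l1 h1 -> within Y l2 h2 -> h1 <= l2 ->
  nocross (lleaves X) (lleaves Y) /\ nocross (lleaves Y) (lleaves X).
Proof.
move=> WX WY h; split=> a b c d ab bc cd ha hc hb hd.
  by move: (WX _ ha) (WX _ hc) (WY _ hb) (WY _ hd); lia.
by move: (WY _ ha) (WY _ hc) (WX _ hb) (WX _ hd); lia.
Qed.

Lemma avoid (A Y : seq nat) l h : (forall y, y \in Y -> l <= y < h) ->
  (forall x, x \in A -> x < l \/ h <= x) -> nocross A Y /\ nocross Y A.
Proof.
move=> WY WA; split=> a b c d ab bc cd ha hc hb hd.
  by move: (WY _ hb) (WY _ hd) (WA _ hc); lia.
by move: (WY _ ha) (WY _ hc) (WA _ hb); lia.
Qed.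

Lemma crossL (Lc Ld Y : seq nat) q : nocross Lc Y -> nocross Y Lc -> q \in Lc -> q \notin Y ->
  (forall y, y \in Y -> y <= q) -> (forall x, x \in Ld -> q < x) ->
  nocross (Lc ++ Ld) Y /\ nocross Y (Lc ++ Ld).
Proof.
move=> N1 N2 hq hqY WY WD; split=> a b c d ab bc cd ha hc hb hd.
- have hd' := WY _ hd.
  have hc' : c \in Lc by move: hc; rewrite mem_cat => /orP [//|/WD]; lia.
  have ha' : a \in Lc by move: ha; rewrite mem_cat => /orP [//|/WD]; lia.
  exact: (N1 a b c d).
- have hc' := WY _ hc.
  have hb' : b \in Lc by move: hb; rewrite mem_cat => /orP [//|/WD]; lia.
  move: hd; rewrite mem_cat => /orP [hd|hd]; first exact: (N2 a b c d).
  have cq : c != q by apply/eqP => E; move: hqY; rewrite -E hc.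
  apply: (N2 a b c q) => //; lia.
Qed.

Lemma crossR (Lc Ld Y : seq nat) p : nocross Ld Y -> nocross Y Ld -> p \in Ld -> p \notin Y ->
  (forall y, y \in Y -> p <= y) -> (forall x, x \in Lc -> x < p) ->
  nocross (Lc ++ Ld) Y /\ nocross Y (Lc ++ Ld).
Proof.
move=> N1 N2 hp hpY WY WC; split=> a b c d ab bc cd ha hc hb hd.
- have hb' := WY _ hb.
  have hc' : c \in Ld by move: hc; rewrite mem_cat => /orP [/WC|//]; lia.
  move: ha; rewrite mem_cat => /orP [ha|ha]; last exact: (N1 a b c d).
  have bp : b != p by apply/eqP => E; move: hpY; rewrite -E hb.
  apply: (N1 p b c d) => //; lia.
- have ha' := WY _ ha.
  have hb' : b \in Ld by move: hb; rewrite mem_cat => /orP [/WC|//]; lia.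
  have hd' : d \in Ld by move: hd; rewrite mem_cat => /orP [/WC|//]; lia.
  exact: (N2 a b c d).
Qed.

Lemma ncl_sub s t : {subset s <= t} -> ncl t -> ncl s.
Proof. by move=> st N X Y hX hY; apply: N; apply: st. Qed.

Lemma ncl_perm s t : perm_eq s t -> ncl s -> ncl t.
Proof. by move=> p; apply: ncl_sub => x; rewrite (perm_mem p). Qed.

Lemma ncl_cat s1 s2 : ncl s1 -> ncl s2 ->
  (forall X Y, X \in s1 -> Y \in s2 -> nocross (lleaves X) (lleaves Y) /\ nocross (lleaves Y) (lleaves X)) ->
  ncl (s1 ++ s2).
Proof.
move=> N1 N2 H X Y; rewrite !mem_cat => /orP [hX|hX] /orP [hY|hY].
- exact: N1.
- by move=> _; case: (H X Y hX hY).
- by move=> _; case: (H Y X hY hX).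
- exact: N2.
Qed.

Lemma ncl_cons M s : ncl s ->
  (forall Y, Y \in s -> nocross (lleaves M) (lleaves Y) /\ nocross (lleaves Y) (lleaves M)) ->
  ncl (M :: s).
Proof.
move=> N H X Y; rewrite !inE => /orP [/eqP->|hX] /orP [/eqP->|hY].
- by rewrite eqxx.
- by move=> _; case: (H Y hY).
- by move=> _; case: (H X hX).
- exact: N.
Qed.

Lemma uniq_catN (s1 s2 : seq nat) x : uniq (s1 ++ s2) -> x \in s1 -> x \notin s2.
Proof.
rewrite cat_uniq => /and3P [_ /hasPn H _] hx; apply/negP => h2.
by move: (H x h2); rewrite hx.
Qed.

Lemma perm_FsL ms : perm_eq (map comp ms ++ flatten (map cuts ms)) (FsL ms).
Proof.
elim: ms => //= m ms IH; rewrite /FsL /= perm_cons.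
move/permP: IH; rewrite /FsL => IH; apply/permP => p; have := IH p.
rewrite !count_cat; lia.
Qed.

Lemma cuts_perm c ms d : perm_eq (cuts (LN (c :: ms ++ [:: d]))) (cuts c ++ FsL ms ++ cuts d).
Proof.
rewrite cuts_LN middle2 /= map_cat flatten_cat /= cats0.
apply/permP => p; move/permP: (perm_FsL ms) => IH; have := IH p; rewrite /FsL.
rewrite !count_cat; lia.
Qed.

Lemma Fs_perm c ms d : perm_eq (Fs (LN (c :: ms ++ [:: d])))
  (LNode (comp c) (comp d) :: (cuts c ++ FsL ms ++ cuts d)).
Proof. by rewrite /Fs comp_LN2 perm_cons cuts_perm. Qed.

Lemma Forall_cat (T : Type) (P : T -> Prop) s1 s2 :
  List.Forall P (s1 ++ s2) -> List.Forall P s1 /\ List.Forall P s2.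
Proof.
elim: s1 => [|x s1 IH] /=; first by move=> H; split => //; constructor.
move=> H; inversion H; subst; have [h1 h2] := IH H3; split => //; constructor => //.
Qed.

Lemma head_cat (s1 s2 : seq nat) : 0 < size s1 -> head 0 (s1 ++ s2) = head 0 s1.
Proof. by case: s1. Qed.

Lemma last_cat2 (s1 s2 : seq nat) : 0 < size s2 -> last 0 (s1 ++ s2) = last 0 s2.
Proof. by rewrite last_cat; case: s2. Qed.

Lemma mem_head0 (s : seq nat) : 0 < size s -> head 0 s \in s.
Proof. by case: s => //= x s _; rewrite inE eqxx. Qed.

Lemma mem_last0 (s : seq nat) : 0 < size s -> last 0 s \in s.
Proof. by case: s => //= x s _; apply: mem_last. Qed.

Lemma sorted_cat_lt (s1 s2 : seq nat) : sorted ltn s1 -> sorted ltn s2 ->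
  (forall x y, x \in s1 -> y \in s2 -> x < y) -> sorted ltn (s1 ++ s2).
Proof.
move=> h1 h2 h; rewrite (sorted_pairwise ltn_trans) pairwise_cat.
rewrite -!(sorted_pairwise ltn_trans) h1 h2 !andbT.
by apply/allrelP => x y; apply: h.
Qed.

Definition FP u := forall a k, red u -> lvs u = iota a k ->
 [/\ (forall X, X \in Fs u -> sorted ltn (lleaves X) /\ within X a (a+k)),
     head 0 (lleaves (comp u)) = a, last 0 (lleaves (comp u)) = (a+k).-1,
     perm_eq (lvsL (Fs u)) (iota a k) & ncl (Fs u)].

Lemma FsL_cons c cs : FsL (c :: cs) = Fs c ++ FsL cs.
Proof. by []. Qed.

Lemma ncl_nil : ncl [::].
Proof. by move=> X Y; rewrite in_nil. Qed.

Lemma FPs cs : List.Forall FP cs -> all red cs -> forall a k, flatten (map lvs cs) = iota a k ->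
 [/\ forall X, X \in FsL cs -> sorted ltn (lleaves X) /\ within X a (a+k),
     perm_eq (lvsL (FsL cs)) (iota a k) & ncl (FsL cs)].
Proof.
elim: cs => [|c cs IH] HF /=.
  move=> _ a k E; have k0 : k = 0 by move: (congr1 size E); rewrite size_iota.
  by subst; split => //; exact: ncl_nil.
inversion HF; subst; move/andP=> [hc hcs] a k E.
have [E1 E2] := iota_split E.
have Hk : k = size (lvs c) + size (flatten (map lvs cs)) by have := congr1 size E; rewrite size_cat size_iota.
have [i1 _ _ p1 n1] := H1 a _ hc E1.
have [j1 p2 n2] := IH H2 hcs _ _ E2.
rewrite FsL_cons; split.
- move=> X; rewrite mem_cat => /orP [/i1 [s w]|/j1 [s w]]; split => //; move=> x /w; lia.
- by rewrite lvsL_cat Hk (iotaD a); exact: perm_cat.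
- apply: ncl_cat => // X Y /i1 [_ wX] /j1 [_ wY]; exact: sep wX wY _.
Qed.

Ltac clia := repeat match goal with H : ?T |- _ =>
   match T with
   | is_true (_ <= _) => fail 1
   | @eq nat _ _ => fail 1
   | is_true (_ && _) => fail 1
   | _ \/ _ => fail 1
   | nat => fail 1
   | _ => clear H
   end end; lia.

Lemma inFs_comp u : comp u \in Fs u.
Proof. by rewrite inE eqxx. Qed.
Lemma inFs_cuts u X : X \in cuts u -> X \in Fs u.
Proof. by move=> h; rewrite inE h orbT. Qed.

Lemma lvs_LN2 c ms d : lvs (LN (c :: ms ++ [:: d])) = lvs c ++ (flatten (map lvs ms) ++ lvs d).
Proof. by rewrite lvs_LN /= map_cat flatten_cat /= cats0. Qed.

Lemma inlvsL X s x : X \in s -> x \in lleaves X -> x \in lvsL s.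
Proof. by move=> hX hx; apply/flatten_mapP; exists X. Qed.

Lemma FP_all u : FP u.
Proof.
elim/ltree_ind': u => [k|ts IH] a k'.
  move=> _ E; case: k' E => [|[|k']] //= [->] //.
  rewrite /Fs /= addn1 /=; split => //.
  - move=> X; rewrite inE => /eqP -> /=; split => // x; rewrite inE => /eqP ->; clia.
  - by apply: ncl_cons; [exact: ncl_nil|].
move=> hr E.
case: (red_split hr) => [[k0 //]|[c [ms [d [Eu hc hd hms]]]]].
case: Eu => Ets; subst ts.
inversion IH; subst; have [HFms HFd] := Forall_cat H2.
inversion HFd; subst.
rewrite lvs_LN2 in E.
have [E1 E'] := iota_split E; have [E2 E3] := iota_split E'.
move: E1 E2 E3.
set k1 := size (lvs c); set j := size (flatten (map lvs ms)); set e := size (lvs d) => E1 E2 E3.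
have Hk : k' = k1 + (j + e) by have := congr1 size E; rewrite !size_cat size_iota.
have k1p : 0 < k1 by apply: lvs_ne.
have ep : 0 < e by apply: lvs_ne.
have [ic hc1 hc2 pc nc] := H1 a _ hc E1.
have [ims pms nms] := FPs HFms hms E2.
have [id hd1 hd2 pd nd] := H3 _ _ hd E3.
have [sLc wLc] := ic _ (inFs_comp c).
have [sLd wLd] := id _ (inFs_comp d).
have uc : uniq (lvsL (Fs c)) by rewrite (perm_uniq pc) iota_uniq.
have ud : uniq (lvsL (Fs d)) by rewrite (perm_uniq pd) iota_uniq.
have FsP := Fs_perm c ms d.
split.
- move=> X; rewrite (perm_mem FsP) inE => /orP [/eqP ->|].
    split.
      apply: sorted_cat_lt sLc sLd _ => x y /wLc hx /wLd hy; clia.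
    by move=> x /=; rewrite mem_cat => /orP [/wLc|/wLd]; clia.
  rewrite !mem_cat => /orP [/inFs_cuts/ic|/orP [/ims|/inFs_cuts/id]] [s w];
    split => //; move=> x /w; clia.
- rewrite comp_LN2 /= head_cat ?hc1 //; exact: lleaves_ne.
- rewrite comp_LN2 /= last_cat2 ?hd2; [congr predn; clia|exact: lleaves_ne].
- apply: perm_trans (lvsL_perm FsP) _.
  rewrite Hk iotaD (iotaD (a + k1)).
  apply: perm_trans (perm_cat pc (perm_cat pms pd)).
  have -> : lvsL (LNode (comp c) (comp d) :: (cuts c ++ FsL ms ++ cuts d)) =
     lleaves (comp c) ++ lleaves (comp d) ++ lvsL (cuts c) ++ lvsL (FsL ms) ++ lvsL (cuts d).
    by rewrite /lvsL /= !map_cat !flatten_cat -catA.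
  have -> : lvsL (Fs c) = lleaves (comp c) ++ lvsL (cuts c) by [].
  have -> : lvsL (Fs d) = lleaves (comp d) ++ lvsL (cuts d) by [].
  apply/permP => p; rewrite !count_cat; clia.
- have FsP' : perm_eq (LNode (comp c) (comp d) :: (cuts c ++ FsL ms ++ cuts d)) (Fs (LN (c :: ms ++ [:: d]))) by rewrite perm_sym.
  apply: ncl_perm FsP' _.
  apply: ncl_cons.
    apply: ncl_cat.
    + by apply: ncl_sub nc => X /inFs_cuts.
    + apply: ncl_cat => //; first by apply: ncl_sub nd => X /inFs_cuts.
      move=> X Y /ims [_ wX] /inFs_cuts/id [_ wY]; exact: sep wX wY _.
    + move=> X Y /inFs_cuts/ic [_ wX]; rewrite mem_cat => /orP [/ims [_ wY]|/inFs_cuts/id [_ wY]];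
        (apply: sep wX wY _; clia).
  move=> Y; rewrite !mem_cat => /orP [hY|/orP [hY|hY]].
  + set q := (a + k1).-1.
    have hq : q \in lleaves (comp c) by rewrite /q -hc2; apply: mem_last0; exact: lleaves_ne.
    have hqY : q \notin lleaves Y.
      apply/negP => h; have := uniq_catN uc hq; rewrite /lvsL /= -/lvsL.
      by rewrite (inlvsL hY h).
    have hne : lleaves (comp c) != lleaves Y by apply/eqP => E0; move: hqY; rewrite -E0 hq.
    have [_ wY] := ic _ (inFs_cuts hY).
    apply: crossL hq hqY _ _.
    * exact: nc (inFs_comp c) (inFs_cuts hY) hne.
    * by apply: nc (inFs_cuts hY) (inFs_comp c) _; rewrite eq_sym.
    * by move=> y /wY; rewrite /q; clia.
    * by move=> x /wLd; rewrite /q; clia.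
  + have [_ wY] := ims _ hY.
    apply: avoid wY _ => x /=; rewrite mem_cat => /orP [/wLc|/wLd]; clia.
  + set p := a + k1 + j.
    have hp : p \in lleaves (comp d) by rewrite /p -hd1; apply: mem_head0; exact: lleaves_ne.
    have hpY : p \notin lleaves Y.
      apply/negP => h; have := uniq_catN ud hp; rewrite /lvsL /= -/lvsL.
      by rewrite (inlvsL hY h).
    have hne : lleaves (comp d) != lleaves Y by apply/eqP => E0; move: hpY; rewrite -E0 hp.
    have [_ wY] := id _ (inFs_cuts hY).
    apply: crossR hp hpY _ _.
    * exact: nd (inFs_comp d) (inFs_cuts hY) hne.
    * by apply: nd (inFs_cuts hY) (inFs_comp d) _; rewrite eq_sym.
    * by move=> y /wY; rewrite /p; clia.
    * by move=> x /wLc; rewrite /p; clia.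
Qed.

Definition hd (X : lbt) := head 0 (lleaves X).

Lemma filter_all (T : eqType) (p : pred T) s : (forall x, x \in s -> p x) -> filter p s = s.
Proof. by move=> h; apply/all_filterP/allP. Qed.

Lemma filter_none (T : eqType) (p : pred T) s : (forall x, x \in s -> ~~ p x) -> filter p s = [::].
Proof.
elim: s => //= x s IH h; rewrite (negbTE (h x (mem_head _ _))) IH // => y hy.
by apply: h; rewrite inE hy orbT.
Qed.

Lemma hd_in X : hd X \in lleaves X.
Proof. exact: mem_head0 (lleaves_ne X). Qed.

Lemma hdFs u a k : red u -> lvs u = iota a k ->
  hd (comp u) = a /\ (forall X, X \in cuts u -> a < hd X < a + k).
Proof.
move=> hr E; have [i h1 _ p _] := FP_all hr E; split => // X hX.
have [_ w] := i X (inFs_cuts hX).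
have := w _ (hd_in X).
have ne : hd X != a.
  apply/eqP => E0.
  have u0 : uniq (lvsL (Fs u)) by rewrite (perm_uniq p) iota_uniq.
  have ha : a \in lleaves (comp u) by rewrite -h1; exact: hd_in.
  have : a \notin lvsL (cuts u) := uniq_catN u0 ha.
  by rewrite -E0 (inlvsL hX (hd_in X)).
by move: ne => /eqP; lia.
Qed.

Lemma Forall_FP cs : List.Forall FP cs.
Proof. by elim: cs => [|c cs IH]; constructor => //; exact: FP_all. Qed.

Lemma hdFsL cs b m : all red cs -> flatten (map lvs cs) = iota b m ->
  forall X, X \in FsL cs -> b <= hd X < b + m.
Proof.
move=> hr E X hX; have [i _ _] := FPs (Forall_FP cs) hr E.
by have [_ w] := i X hX; apply: w; exact: hd_in.
Qed.

Definition TU u := forall a u2, red u -> red u2 -> lvs u = iota a (size (lvs u)) ->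
  lvs u2 = iota a (size (lvs u2)) -> comp u = comp u2 -> perm_eq (cuts u) (cuts u2) -> u = u2.

Lemma last_comp u a k : red u -> lvs u = iota a k -> last 0 (lleaves (comp u)) = (a + k).-1.
Proof. by move=> hr E; have [] := FP_all hr E. Qed.

Lemma SU cs1 : List.Forall TU cs1 -> forall cs2 a k1 k2, all red cs1 -> all red cs2 ->
  flatten (map lvs cs1) = iota a k1 -> flatten (map lvs cs2) = iota a k2 ->
  perm_eq (FsL cs1) (FsL cs2) -> cs1 = cs2.
Proof.
elim: cs1 => [|c1 cs1 IH] HT [|c2 cs2] a k1 k2 //=.
- by move=> _ _ _ _ /perm_size; rewrite /FsL /=.
- by move=> _ _ _ _ /perm_size; rewrite /FsL /=.
move=> /andP [hc1 hcs1] /andP [hc2 hcs2] E1 E2 P.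
inversion HT; subst.
have [F1 G1] := iota_split E1; have [F2 G2] := iota_split E2.
move: F1 G1 F2 G2; set m1 := size (lvs c1); set m2 := size (lvs c2) => F1 G1 F2 G2.
have [h1 hc1'] := hdFs hc1 F1; have [h2 hc2'] := hdFs hc2 F2.
have hL1 := hdFsL hcs1 G1; have hL2 := hdFsL hcs2 G2.
have m1p : 0 < m1 by apply: lvs_ne.
have m2p : 0 < m2 by apply: lvs_ne.
have Ec : comp c1 = comp c2.
  have f1 : filter (fun X => hd X == a) (FsL (c1 :: cs1)) = [:: comp c1].
    rewrite FsL_cons filter_cat /= h1 eqxx !filter_none //.
      by move=> X /hL1 h; apply/eqP; clia.
    by move=> X /hc1' h; apply/eqP; clia.
  have f2 : filter (fun X => hd X == a) (FsL (c2 :: cs2)) = [:: comp c2].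
    rewrite FsL_cons filter_cat /= h2 eqxx !filter_none //.
      by move=> X /hL2 h; apply/eqP; clia.
    by move=> X /hc2' h; apply/eqP; clia.
  have := perm_filter (fun X => hd X == a) P; rewrite f1 f2.
  by move/perm_mem => /(_ (comp c1)); rewrite !inE eqxx => /esym/eqP.
have Em : m1 = m2.
  have := last_comp hc1 F1; rewrite Ec (last_comp hc2 F2); clia.
have Pc : perm_eq (cuts c1) (cuts c2).
  have f1 : filter (fun X => hd X < a + m1) (FsL (c1 :: cs1)) = Fs c1.
    rewrite FsL_cons filter_cat (filter_none (s := FsL cs1)); last by move=> X /hL1; clia.
    by rewrite cats0 filter_all // => X; rewrite inE => /orP [/eqP ->|/hc1']; rewrite ?h1; clia.
  have f2 : filter (fun X => hd X < a + m1) (FsL (c2 :: cs2)) = Fs c2.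
    rewrite FsL_cons filter_cat (filter_none (s := FsL cs2)); last by move=> X /hL2; clia.
    by rewrite cats0 filter_all // => X; rewrite inE => /orP [/eqP ->|/hc2']; rewrite ?h2; clia.
  have := perm_filter (fun X => hd X < a + m1) P; rewrite f1 f2 /Fs Ec perm_cons //.
have <- : c1 = c2 by apply: H1 hc1 hc2 F1 F2 Ec Pc.
congr cons.
have f1 : filter (fun X => a + m1 <= hd X) (FsL (c1 :: cs1)) = FsL cs1.
  rewrite FsL_cons filter_cat (filter_all (s := FsL cs1)); last by move=> X /hL1; clia.
  by rewrite filter_none // => X; rewrite inE => /orP [/eqP ->|/hc1']; rewrite ?h1; clia.
have f2 : filter (fun X => a + m1 <= hd X) (FsL (c2 :: cs2)) = FsL cs2.
  rewrite FsL_cons filter_cat (filter_all (s := FsL cs2)); last by move=> X /hL2; clia.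
  by rewrite filter_none // => X; rewrite inE => /orP [/eqP ->|/hc2']; rewrite ?h2; clia.
apply: (IH H2 cs2 (a + m1) _ _ hcs1 hcs2 G1); first by rewrite Em; exact: G2.
by have := perm_filter (fun X => a + m1 <= hd X) P; rewrite f1 f2.
Qed.

Lemma TU_all u : TU u.
Proof.
elim/ltree_ind': u => [k|ts IH] a u2 hr1 hr2 E1 E2 Ec Pc.
  case: (red_split hr2) => [[k2 Eu]|[c2 [ms2 [d2 [Eu _ _ _]]]]]; subst u2.
    by move: Ec => /= [->].
  by move: Ec; rewrite comp_LN2.
case: (red_split hr1) => [[k0 //]|[c1 [ms1 [d1 [Eu hc1 hd1 hms1]]]]].
case: Eu => Ets; subst ts.
case: (red_split hr2) => [[k2 Eu]|[c2 [ms2 [d2 [Eu hc2 hd2 hms2]]]]]; subst u2.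
  by move: Ec; rewrite comp_LN2.
inversion IH; subst; have [HFms HFd] := Forall_cat H2; inversion HFd; subst.
move: Ec; rewrite !comp_LN2 => [[Ecc Ecd]].
move: E1 E2; rewrite !lvs_LN2 => E1 E2.
have [F1 E1'] := iota_split E1; have [G1 K1] := iota_split E1'.
have [F2 E2'] := iota_split E2; have [G2 K2] := iota_split E2'.
move: F1 G1 K1 F2 G2 K2.
set p1 := size (lvs c1); set q1 := size (flatten (map lvs ms1)); set r1 := size (lvs d1).
set p2 := size (lvs c2); set q2 := size (flatten (map lvs ms2)); set r2 := size (lvs d2).
move=> F1 G1 K1 F2 G2 K2.
have p1p : 0 < p1 by apply: lvs_ne.
have p2p : 0 < p2 by apply: lvs_ne.
have Ep : p1 = p2.
  have := last_comp hc1 F1; rewrite Ecc (last_comp hc2 F2); clia.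
have Eq : a + p1 + q1 = a + p2 + q2.
  have [h1 _] := hdFs hd1 K1; have [h2 _] := hdFs hd2 K2.
  by rewrite -h1 -h2 Ecd.
have [_ hc1'] := hdFs hc1 F1; have [_ hc2'] := hdFs hc2 F2.
have [_ hd1'] := hdFs hd1 K1; have [_ hd2'] := hdFs hd2 K2.
have hL1 := hdFsL hms1 G1; have hL2 := hdFsL hms2 G2.
have P : perm_eq (cuts c1 ++ FsL ms1 ++ cuts d1) (cuts c2 ++ FsL ms2 ++ cuts d2).
  apply: perm_trans (cuts_perm c2 ms2 d2); rewrite perm_sym.
  apply: perm_trans (cuts_perm c1 ms1 d1); by rewrite perm_sym.
have <- : c1 = c2.
  apply: H1 hc1 hc2 F1 F2 Ecc _.
  have := perm_filter (fun X => hd X < a + p1) P.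
  rewrite !filter_cat (filter_all (s := cuts c1)); last by move=> X /hc1'; clia.
  rewrite (filter_all (s := cuts c2)); last by move=> X /hc2'; clia.
  rewrite (filter_none (s := FsL ms1)); last by move=> X /hL1; clia.
  rewrite (filter_none (s := FsL ms2)); last by move=> X /hL2; clia.
  rewrite (filter_none (s := cuts d1)); last by move=> X /hd1'; clia.
  rewrite (filter_none (s := cuts d2)); last by move=> X /hd2'; clia.
  by rewrite !cats0.
have <- : d1 = d2.
  apply: H3 hd1 hd2 K1 _ Ecd _; first by rewrite Eq.
  have := perm_filter (fun X => a + p1 + q1 <= hd X) P.
  rewrite !filter_cat (filter_all (s := cuts d1)); last by move=> X /hd1'; clia.
  rewrite (filter_all (s := cuts d2)); last by move=> X /hd2'; clia.
  rewrite (filter_none (s := FsL ms1)); last by move=> X /hL1; clia.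
  rewrite (filter_none (s := FsL ms2)); last by move=> X /hL2; clia.
  rewrite (filter_none (s := cuts c1)); last by move=> X /hc1'; clia.
  rewrite (filter_none (s := cuts c2)); last by move=> X /hc2'; clia.
  by [].
have -> : ms1 = ms2.
  apply: (SU HFms hms1 hms2 G1); first by rewrite Ep; exact: G2.
  have := perm_filter (fun X => (a + p1 <= hd X) && (hd X < a + p1 + q1)) P.
  rewrite !filter_cat (filter_all (s := FsL ms1)); last by move=> X /hL1; clia.
  rewrite (filter_all (s := FsL ms2)); last by move=> X /hL2; clia.
  rewrite (filter_none (s := cuts d1)); last by move=> X /hd1'; clia.
  rewrite (filter_none (s := cuts d2)); last by move=> X /hd2'; clia.
  rewrite (filter_none (s := cuts c1)); last by move=> X /hc1'; clia.
  rewrite (filter_none (s := cuts c2)); last by move=> X /hc2'; clia.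
  by rewrite !cats0.
by [].
Qed.

Definition Arr lo hi (s : seq lbt) :=
  [/\ all (fun b => sorted ltn (lleaves b)) s, uniq (lvsL s),
      (forall x, (x \in lvsL s) = (lo <= x < hi)) & ncl s].

Lemma sorted_head_le (s : seq nat) z : sorted ltn s -> z \in s -> head 0 s <= z.
Proof.
case: s => // h t; rewrite (sorted_pairwise ltn_trans) /= => /andP [/allP H _].
by rewrite /= inE => /orP [/eqP ->//|/H /ltnW].
Qed.

Lemma sorted_le_last (s : seq nat) z : sorted ltn s -> z \in s -> z <= last 0 s.
Proof.
case: s => // h t; rewrite (sorted_pairwise ltn_trans) /=.
elim: t h z => [|h' t IH] h z /=; first by move=> _; rewrite inE => /eqP ->.
move=> /andP [/andP [hh' ah] /andP [ah' pt]].
have IH' := IH h'; rewrite /= ah' pt in IH'.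
rewrite inE => /orP [/eqP ->|hz]; last exact: IH' _ isT hz.
have := IH' h' isT; rewrite inE eqxx => /(_ isT); move: hh'; clia.
Qed.

Lemma nocross_sub A B A' B' : {subset A' <= A} -> {subset B' <= B} -> nocross A B -> nocross A' B'.
Proof. by move=> sA sB N a b c d h1 h2 h3 ha hc hb hd; apply: (N a b c d) => //; auto. Qed.

Lemma Arr_perm lo hi s t : perm_eq s t -> Arr lo hi s -> Arr lo hi t.
Proof.
move=> p [h1 h2 h3 h4]; split.
- by apply/allP => X; rewrite -(perm_mem p) => /(allP h1).
- by rewrite -(perm_uniq (lvsL_perm p)).
- by move=> x; rewrite -(perm_mem (lvsL_perm p)).
- exact: ncl_perm p h4.
Qed.

Lemma subseq_lvsL_filter (p : pred lbt) s : subseq (lvsL (filter p s)) (lvsL s).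
Proof.
elim: s => //= X s IH; case: (p X); rewrite /lvsL /= -/lvsL.
  by rewrite cat_subseq.
exact: subseq_trans IH (suffix_subseq _ _).
Qed.

Lemma in_lvsL z s : reflect (exists2 Y, Y \in s & z \in lleaves Y) (z \in lvsL s).
Proof. exact: flatten_mapP. Qed.

Lemma BY B s Y : uniq (lvsL (B :: s)) -> ncl (B :: s) -> Y \in s ->
  [/\ nocross (lleaves B) (lleaves Y), nocross (lleaves Y) (lleaves B)
    & forall z, z \in lleaves B -> z \notin lleaves Y].
Proof.
move=> u N hY.
have D : forall z, z \in lleaves B -> z \notin lleaves Y.
  move=> z hz; apply/negP => hz'.
  have : z \notin lvsL s := uniq_catN u hz.
  by rewrite (inlvsL hY hz').
have ne : lleaves B != lleaves Y.
  by apply/eqP => E; have := D (hd Y); rewrite E hd_in => /(_ isT).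
split => //.
- by apply: N; rewrite ?inE ?eqxx ?hY ?orbT.
- by apply: N; rewrite ?inE ?eqxx ?hY ?orbT // eq_sym.
Qed.

Lemma perm_filter3 (T : eqType) (p1 p2 p3 : pred T) (s : seq T) :
  (forall Y, Y \in s -> p1 Y + p2 Y + p3 Y = 1) ->
  perm_eq s (filter p1 s ++ filter p2 s ++ filter p3 s).
Proof.
move=> H; apply/permP => q; rewrite !count_cat.
elim: s H => //= Y s IH H.
have := H Y (mem_head _ _); have IH' : count q s = count q (filter p1 s) +
  (count q (filter p2 s) + count q (filter p3 s)).
  by apply: IH => Z hZ; apply: H; rewrite inE hZ orbT.
case: (p1 Y); case: (p2 Y); case: (p3 Y) => /= H0; rewrite IH'; clia.
Qed.

Lemma lvsL_cons X s : lvsL (X :: s) = lleaves X ++ lvsL s.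
Proof. by []. Qed.

Lemma Arr_sub lo hi B rest B' (p : pred lbt) lo' hi' : Arr lo hi (B :: rest) ->
  subseq (lleaves B') (lleaves B) ->
  (forall x, (x \in lvsL (B' :: filter p rest)) = (lo' <= x < hi')) ->
  Arr lo' hi' (B' :: filter p rest).
Proof.
move=> [As Au Am An] sub Hm; split => //.
- move: As => /= /andP [sB sr]; rewrite (subseq_sorted ltn_trans sub sB) /=.
  by apply/allP => Y; rewrite mem_filter => /andP [_ /(allP sr)].
- apply: subseq_uniq Au; rewrite !lvsL_cons; apply: cat_subseq sub _.
  exact: subseq_lvsL_filter.
- have sB : {subset lleaves B' <= lleaves B} by move=> z; apply: mem_subseq.
  move=> X Y; rewrite !inE !mem_filter.
  move=> /orP [/eqP->|/andP [_ hX]] /orP [/eqP->|/andP [_ hY]].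
  + by rewrite eqxx.
  + have [N1 _ _] := BY Au An hY; move=> _; exact: nocross_sub sB _ N1.
  + have [_ N2 _] := BY Au An hX; move=> _; exact: nocross_sub _ sB N2.
  + by apply: An; rewrite inE ?hX ?hY orbT.
Qed.

Lemma Arr_subF s (p : pred lbt) lo' hi' : all (fun b => sorted ltn (lleaves b)) s ->
  uniq (lvsL s) -> ncl s ->
  (forall x, (x \in lvsL (filter p s)) = (lo' <= x < hi')) -> Arr lo' hi' (filter p s).
Proof.
move=> As Au An Hm; split => //.
- by apply/allP => Y; rewrite mem_filter => /andP [_ /(allP As)].
- apply: subseq_uniq Au; exact: subseq_lvsL_filter.
- by apply: ncl_sub An => Y; rewrite mem_filter => /andP [].
Qed.

Lemma Arr_tail lo hi B rest : Arr lo hi (B :: rest) ->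
  [/\ all (fun b => sorted ltn (lleaves b)) rest, uniq (lvsL rest) & ncl rest].
Proof.
move=> [As Au _ An]; split.
- by move: As => /= /andP [].
- by move: Au; rewrite lvsL_cons cat_uniq => /and3P [].
- by apply: ncl_sub An => Y hY; rewrite inE hY orbT.
Qed.

Lemma nest B Y p q : nocross (lleaves B) (lleaves Y) -> p \in lleaves B -> q \in lleaves B ->
  q \notin lleaves Y -> p < hd Y -> hd Y < q -> forall z, z \in lleaves Y -> z < q.
Proof.
move=> N hp hq hqY h1 h2 z hz.
have zq : z != q by apply/eqP => E; move: hqY; rewrite -E hz.
case: (ltnP q z) => // h; last by move: zq h; clia.
by case: (N p (hd Y) q z) => //; exact: hd_in.
Qed.

Lemma nest2 B Y q r : nocross (lleaves Y) (lleaves B) -> q \in lleaves B -> r \in lleaves B ->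
  q \notin lleaves Y -> hd Y < q -> (forall z, z \in lleaves Y -> z < r) ->
  forall z, z \in lleaves Y -> z < q.
Proof.
move=> N hq hr hqY h1 hzr z hz.
have zq : z != q by apply/eqP => E; move: hqY; rewrite -E hz.
case: (ltnP q z) => // h; last by move: zq h; clia.
by case: (N (hd Y) q z r) => //; [exact: hzr|exact: hd_in].
Qed.

Definition TEst N := forall a b B rest, b - a < N -> Arr a b.+1 (B :: rest) -> hd B = a ->
  last 0 (lleaves B) = b ->
  exists u, [/\ red u, lvs u = iota a (b.+1 - a), comp u = B & perm_eq (cuts u) rest].
Definition SEst N := forall lo len s, len <= N -> Arr lo (lo + len) s ->
  exists cs, [/\ all red cs, flatten (map lvs cs) = iota lo len & perm_eq (FsL cs) s].

Lemma TE_step N : TEst N -> SEst N -> TEst N.+1.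
Proof.
move=> TEn SEn a b B rest hN HA hB lB.
have [As Au Am An] := HA.
have rest_rng : forall Y z, Y \in rest -> z \in lleaves Y -> a <= z < b.+1.
  by move=> Y z hY hz; rewrite -Am lvsL_cons mem_cat (inlvsL hY hz) orbT.
have rest_sorted : forall Y, Y \in rest -> sorted ltn (lleaves Y).
  by move=> Y hY; move: As => /= /andP [_ /allP]; apply.
have hd_min : forall Y z, Y \in rest -> z \in lleaves Y -> hd Y <= z.
  by move=> Y z hY; apply: sorted_head_le; apply: rest_sorted.
have D : forall Y z, Y \in rest -> z \in lleaves B -> z \notin lleaves Y.
  by move=> Y z hY; have [_ _ D] := BY Au An hY; apply: D.
have Dh : forall Y z, Y \in rest -> z \in lleaves B -> hd Y != z.
  by move=> Y z hY hz; apply/eqP => E; move: (D Y z hY hz); rewrite -E hd_in.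
have NC1 : forall Y, Y \in rest -> nocross (lleaves B) (lleaves Y).
  by move=> Y hY; have [] := BY Au An hY.
have NC2 : forall Y, Y \in rest -> nocross (lleaves Y) (lleaves B).
  by move=> Y hY; have [] := BY Au An hY.
case: B HA As Au Am An hB lB D Dh NC1 NC2 => [k|L R] HA As Au Am An hB lB D Dh NC1 NC2.
  move: hB lB; rewrite /hd /= => Ek Ek'; subst k b.
  have -> : rest = [::].
    case: rest HA As Au Am An rest_rng rest_sorted hd_min D Dh NC1 NC2 => // Y rest' HA As Au Am An rr _ _ D Dh _ _.
    have := Dh Y a (mem_head _ _) (mem_head _ _).
    have := rr Y (hd Y) (mem_head _ _) (hd_in Y); clia.
  by exists (LL a); rewrite /= subSnn.
have sB : sorted ltn (lleaves L ++ lleaves R) by move: As => /= /andP [].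
move: (sB); rewrite (sorted_pairwise ltn_trans) pairwise_cat -!(sorted_pairwise ltn_trans).
move=> /and3P [/allrelP LR sL sR].
set x := last 0 (lleaves L); set y := hd R.
have hxL : x \in lleaves L := mem_last0 (lleaves_ne L).
have hyR : y \in lleaves R := hd_in R.
have xy : x < y := LR _ _ hxL hyR.
have hLa : hd L = a by move: hB; rewrite /hd /= head_cat // lleaves_ne.
have hRb : last 0 (lleaves R) = b by move: lB; rewrite /= last_cat2 // lleaves_ne.
have inB : forall z, (z \in lleaves (LNode L R)) = (z \in lleaves L) || (z \in lleaves R).
  by move=> z; rewrite /= mem_cat.
have haB : a \in lleaves (LNode L R) by rewrite inB -hLa hd_in.
have hxB : x \in lleaves (LNode L R) by rewrite inB hxL.
have hyB : y \in lleaves (LNode L R) by rewrite inB hyR orbT.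
have hbB : b \in lleaves (LNode L R) by rewrite inB -hRb mem_last0 ?orbT // lleaves_ne.
have Lrng : forall z, z \in lleaves L -> a <= z <= x.
  move=> z hz; rewrite -hLa (sorted_head_le sL hz); exact: sorted_le_last sL hz.
have Rrng : forall z, z \in lleaves R -> y <= z <= b.
  move=> z hz; rewrite -hRb (sorted_le_last sR hz) andbT; exact: sorted_head_le sR hz.
have ax : a <= x by have := Lrng x hxL; clia.
have yb : y <= b by have := Rrng y hyR; clia.
have trich : forall Y z, Y \in rest -> z \in lleaves Y ->
    [\/ hd Y < x /\ z < x, (x < hd Y < y) /\ (x < z < y) | y < hd Y /\ y < z].
  move=> Y z hY hz.
  have n1 := Dh Y x hY hxB; have n2 := Dh Y y hY hyB; have n3 := Dh Y a hY haB.
  have n4 := D Y b hY hbB.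
  have r1 := rest_rng Y (hd Y) hY (hd_in Y); have r2 := rest_rng Y z hY hz.
  have m1 := hd_min Y z hY hz.
  case: (ltnP (hd Y) x) => h1.
    apply: Or31; split => //.
    apply: (nest (NC1 Y hY) haB hxB (D Y x hY hxB) _ h1 hz); move: n3 r1; clia.
  case: (ltnP (hd Y) y) => h2.
    apply: Or32; split; first by move: n1 h1 h2; clia.
    have zy : z < y.
      apply: (nest2 (NC2 Y hY) hyB hbB (D Y y hY hyB) h2 _ hz) => w hw.
      have := rest_rng Y w hY hw; have : w != b by apply/eqP => E; move: n4; rewrite -E hw.
      clia.
    move: zy m1 n1 h1; clia.
  apply: Or33; split; first by move: n2 h2; clia.
  move: m1 n2 h2; clia.
have inBR : forall z, a <= z < b.+1 -> (z \in lleaves L) || (z \in lleaves R) ||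
     has (fun Y => (Y \in rest) && (z \in lleaves Y)) rest.
  move=> z hz; have : z \in lvsL (LNode L R :: rest) by rewrite Am.
  rewrite lvsL_cons mem_cat inB => /orP [->//|/in_lvsL [Y hY hzY]].
  by apply/orP; right; apply/hasP; exists Y => //; rewrite hY.
pose pL := fun Y => hd Y < x.
pose pM := fun Y => (x < hd Y) && (hd Y < y).
pose pR := fun Y => y < hd Y.
have mL : forall z, (z \in lvsL (L :: filter pL rest)) = (a <= z < x.+1).
  move=> z; rewrite lvsL_cons mem_cat; apply/idP/idP.
    case/orP => [/Lrng|/in_lvsL [Y]]; first by clia.
    rewrite mem_filter => /andP [hpL hY] hz.
    have := rest_rng Y z hY hz; case: (trich Y z hY hz); rewrite /pL in hpL; clia.
  move=> hz; have : a <= z < b.+1 by move: hz xy yb; clia.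
  move/inBR => /orP [/orP [->//|/Rrng]|/hasP [Y _ /andP [hY hzY]]]; first by move: hz xy; clia.
  apply/orP; right; apply/in_lvsL; exists Y => //; rewrite mem_filter hY andbT /pL.
  by case: (trich Y z hY hzY); move: hz; clia.
have mR : forall z, (z \in lvsL (R :: filter pR rest)) = (y <= z < b.+1).
  move=> z; rewrite lvsL_cons mem_cat; apply/idP/idP.
    case/orP => [/Rrng|/in_lvsL [Y]]; first by clia.
    rewrite mem_filter => /andP [hpR hY] hz.
    have := rest_rng Y z hY hz; case: (trich Y z hY hz); rewrite /pR in hpR; clia.
  move=> hz; have : a <= z < b.+1 by move: hz xy ax; clia.
  move/inBR => /orP [/orP [/Lrng|->//]|/hasP [Y _ /andP [hY hzY]]]; first by move: hz xy; clia.
  apply/orP; right; apply/in_lvsL; exists Y => //; rewrite mem_filter hY andbT /pR.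
  by case: (trich Y z hY hzY); move: hz; clia.
have mM : forall z, (z \in lvsL (filter pM rest)) = (x.+1 <= z < x.+1 + (y - x.+1)).
  move=> z; apply/idP/idP.
    case/in_lvsL => Y; rewrite mem_filter => /andP [hpM hY] hz.
    case: (trich Y z hY hz); rewrite /pM in hpM; move: xy; clia.
  move=> hz; have : a <= z < b.+1 by move: hz xy ax yb; clia.
  move/inBR => /orP [/orP [/Lrng|/Rrng]|/hasP [Y _ /andP [hY hzY]]]; try by move: hz xy; clia.
  apply/in_lvsL; exists Y => //; rewrite mem_filter hY andbT /pM.
  by case: (trich Y z hY hzY); move: hz xy; clia.
have [Ats Atu Atn] := Arr_tail HA.
have AL := Arr_sub HA (prefix_subseq (lleaves L) (lleaves R)) mL.
have AR := Arr_sub HA (suffix_subseq (lleaves L) (lleaves R)) mR.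
have AM := Arr_subF Ats Atu Atn mM.
have [uL [rL lL cL' pL']] := TEn a x L (filter pL rest) ltac:(move: hN xy yb; clia) AL hLa erefl.
have [uR [rR lR cR' pR']] := TEn y b R (filter pR rest) ltac:(move: hN xy ax; clia) AR erefl hRb.
have [cs [rcs lcs pcs]] := SEn x.+1 (y - x.+1) (filter pM rest) ltac:(move: hN xy ax yb; clia) AM.
exists (LN (uL :: cs ++ [:: uR])); split.
- by rewrite /= size_cat addn1 /= rL all_cat rcs /= rR.
- rewrite lvs_LN2 lL lcs lR.
  have -> : b.+1 - a = (x.+1 - a) + ((y - x.+1) + (b.+1 - y)) by move: ax xy yb; clia.
  rewrite iotaD (iotaD (a + (x.+1 - a))).
  have e1 : a + (x.+1 - a) = x.+1 by move: ax; clia.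
  have e2 : x.+1 + (y - x.+1) = y by move: xy; clia.
  by rewrite e1 e2.
- by rewrite comp_LN2 cL' cR'.
- apply: perm_trans (cuts_perm uL cs uR) _.
  apply: perm_trans (perm_cat pL' (perm_cat pcs pR')) _.
  rewrite perm_sym; apply: perm_filter3 => Y hY.
  rewrite /pL /pM /pR.
  by case: (trich Y (hd Y) hY (hd_in Y)) => [[h1 _]|[/andP [h1 h2] _]|[h1 _]];
    move: h1 xy; try move: h2; clia.
Qed.

Lemma SE_zero lo s : Arr lo (lo + 0) s ->
  exists cs, [/\ all red cs, flatten (map lvs cs) = iota lo 0 & perm_eq (FsL cs) s].
Proof.
move=> [_ _ Am _]; exists [::]; split => //.
case: s Am => [|Y s'] // Am.
have := Am (hd Y); rewrite (inlvsL (mem_head _ _) (hd_in Y)); clia.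
Qed.

Lemma SE_step N : TEst N.+1 -> SEst N -> SEst N.+1.
Proof.
move=> TE SEn lo len s hlen HA.
case: len hlen HA => [|len] hlen HA; first exact: SE_zero.
have [As Au Am An] := HA.
have : lo \in lvsL s by rewrite Am; clia.
case/in_lvsL => B hBs hloB.
have pB := perm_to_rem hBs; move: pB; set s' := rem B s => pB.
have HA' : Arr lo (lo + len.+1) (B :: s') := Arr_perm pB HA.
have [As' Au' Am' An'] := HA'.
have sB : sorted ltn (lleaves B) by move: As' => /= /andP [].
have rng : forall z, z \in lleaves B -> lo <= z < lo + len.+1.
  by move=> z hz; rewrite -Am' lvsL_cons mem_cat hz.
have hdB : hd B = lo.
  have := sorted_head_le sB hloB; have := rng _ (hd_in B); rewrite /hd; clia.
set m := last 0 (lleaves B).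
have hmB : m \in lleaves B := mem_last0 (lleaves_ne B).
have Brng : forall z, z \in lleaves B -> lo <= z <= m.
  move=> z hz; rewrite -hdB (sorted_head_le sB hz); exact: sorted_le_last sB hz.
have mrng := rng m hmB.
have rest_rng : forall Y z, Y \in s' -> z \in lleaves Y -> lo <= z < lo + len.+1.
  by move=> Y z hY hz; rewrite -Am' lvsL_cons mem_cat (inlvsL hY hz) orbT.
have hd_min : forall Y z, Y \in s' -> z \in lleaves Y -> hd Y <= z.
  move=> Y z hY; apply: sorted_head_le.
  by move: As' => /= /andP [_ /allP]; apply.
have D : forall Y z, Y \in s' -> z \in lleaves B -> z \notin lleaves Y.
  by move=> Y z hY; have [_ _ D] := BY Au' An' hY; apply: D.
have Dh : forall Y z, Y \in s' -> z \in lleaves B -> hd Y != z.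
  by move=> Y z hY hz; apply/eqP => E; move: (D Y z hY hz); rewrite -E hd_in.
have NC1 : forall Y, Y \in s' -> nocross (lleaves B) (lleaves Y).
  by move=> Y hY; have [] := BY Au' An' hY.
have dich : forall Y z, Y \in s' -> z \in lleaves Y ->
    (hd Y < m /\ z < m) \/ (m < hd Y /\ m < z).
  move=> Y z hY hz.
  have n1 := Dh Y m hY hmB; have n2 := Dh Y lo hY hloB.
  have r1 := rest_rng Y (hd Y) hY (hd_in Y); have m1 := hd_min Y z hY hz.
  case: (ltnP (hd Y) m) => h1.
    left; split => //.
    apply: (nest (NC1 Y hY) hloB hmB (D Y m hY hmB) _ h1 hz); move: n2 r1; clia.
  by right; split; move: n1 h1 m1; clia.
have inBs : forall z, lo <= z < lo + len.+1 -> (z \in lleaves B) ||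
     has (fun Y => (Y \in s') && (z \in lleaves Y)) s'.
  move=> z hz; have : z \in lvsL (B :: s') by rewrite Am'.
  rewrite lvsL_cons mem_cat => /orP [->//|/in_lvsL [Y hY hzY]].
  by apply/orP; right; apply/hasP; exists Y => //; rewrite hY.
pose pI := fun Y => hd Y < m.
pose pO := fun Y => m < hd Y.
have mI : forall z, (z \in lvsL (B :: filter pI s')) = (lo <= z < m.+1).
  move=> z; rewrite lvsL_cons mem_cat; apply/idP/idP.
    case/orP => [/Brng|/in_lvsL [Y]]; first by clia.
    rewrite mem_filter => /andP [hp hY] hz.
    have := rest_rng Y z hY hz; case: (dich Y z hY hz); rewrite /pI in hp; clia.
  move=> hz; have : lo <= z < lo + len.+1 by move: hz mrng; clia.
  move/inBs => /orP [->//|/hasP [Y _ /andP [hY hzY]]].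
  apply/orP; right; apply/in_lvsL; exists Y => //; rewrite mem_filter hY andbT /pI.
  by case: (dich Y z hY hzY); move: hz; clia.
have mO : forall z, (z \in lvsL (filter pO s')) = (m.+1 <= z < m.+1 + (lo + len.+1 - m.+1)).
  move=> z; apply/idP/idP.
    case/in_lvsL => Y; rewrite mem_filter => /andP [hp hY] hz.
    have := rest_rng Y z hY hz; case: (dich Y z hY hz); rewrite /pO in hp; move: mrng; clia.
  move=> hz; have : lo <= z < lo + len.+1 by move: hz mrng; clia.
  move/inBs => /orP [/Brng|/hasP [Y _ /andP [hY hzY]]]; first by move: hz; clia.
  apply/in_lvsL; exists Y => //; rewrite mem_filter hY andbT /pO.
  by case: (dich Y z hY hzY); move: hz; clia.
have [Ats Atu Atn] := Arr_tail HA'.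
have AI := Arr_sub HA' (subseq_refl _) mI.
have AO := Arr_subF Ats Atu Atn mO.
have [u [ru lu cu pu]] := TE lo m B (filter pI s') ltac:(move: mrng hlen; clia) AI hdB erefl.
have [cs [rcs lcs pcs]] := SEn m.+1 (lo + len.+1 - m.+1) (filter pO s')
   ltac:(move: mrng hlen; clia) AO.
exists (u :: cs); split.
- by rewrite /= ru rcs.
- rewrite [flatten _]/= lu lcs.
  have -> : iota lo len.+1 = iota lo ((m.+1 - lo) + (lo + len.+1 - m.+1)).
    by congr iota; move: mrng; clia.
  rewrite iotaD; congr (_ ++ iota _ _); move: mrng; clia.
- rewrite perm_sym in pB; apply: perm_trans _ pB.
  rewrite FsL_cons /Fs cu /= perm_cons.
  apply: perm_trans (perm_cat pu pcs) _.
  have := @perm_filter3 _ pI pred0 pO s' _; rewrite filter_pred0 /= perm_sym; apply.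
  move=> Y hY; rewrite /pI /pO /=.
  by case: (dich Y (hd Y) hY (hd_in Y)) => [[h1 _]|[h1 _]]; move: h1; clia.
Qed.

Lemma TSE N : TEst N /\ SEst N.
Proof.
elim: N => [|N [TEn SEn]].
  split; first by move=> a b B rest.
  by move=> lo len s; rewrite leqn0 => /eqP ->; exact: SE_zero.
have TE1 := TE_step TEn SEn; split => //; exact: SE_step TE1 SEn.
Qed.

Lemma red_shape u : red u = reduced (lshape u).
Proof.
elim/ltree_ind': u => // ts IH /=; rewrite size_map; congr (_ && _).
elim: IH => //= t ts' Ht _ IH'; by rewrite Ht IH'.
Qed.

Lemma phi_LN t cs k : (lab t 1).1 = LN (cs ++ [:: LL k]) -> perm_eq (phi t) (FsL cs).
Proof.
move=> E; rewrite /phi E size_cat addn1 /= take_size_cat // map_cat flatten_cat /= cats0.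
exact: perm_FsL.
Qed.

Lemma glue n t : PST n t -> exists cs, [/\ (lab t 1).1 = LN (cs ++ [:: LL n.+1]), all red cs,
  flatten (map lvs cs) = iota 1 n & perm_eq (phi t) (FsL cs)].
Proof.
case/and3P => hr hp /eqP hw.
have [h1 h2 _] := labP t 1.
move: h1 h2; case E: (lab t 1).1 => [k|ts] /= h1 h2; first by move: hp; rewrite -h1.
have hn : nleaves t = n.+1.
  move: hp hw; rewrite /prime_tree /weight => /andP [h _]; clia.
have hru : red (LN ts) by rewrite red_shape [lshape _]/= h1.
case/lastP: ts E h1 h2 hru => [|cs w] E h1 h2 hru; first by move: hp; rewrite -h1.
have hw' : lshape w = Leaf.
  move: hp; rewrite -h1 /prime_tree /= map_rcons.
  case Em: (rcons _ _) => [|c cs']; first by move: Em; case: (map lshape cs).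
  move=> /andP [_]; have : last c cs' = lshape w.
    by rewrite -(last_rcons c (map lshape cs) (lshape w)) Em.
  by move=> ->; case: (lshape w).
case: w hw' E h1 h2 hru => [k|ws] //= _ E h1 h2 hru.
rewrite -cats1 in E h2 hru.
move: h2; rewrite map_cat flatten_cat /= hn => h2.
have [h3 h4] := iota_split h2.
have Hs : size (flatten (map lvs cs)) = n.
  by have := congr1 size h2; rewrite size_cat size_iota /=; clia.
rewrite Hs in h3 h4; case: h4 => ->.
exists cs; split.
- by rewrite -cats1 add1n.
- by move: hru => /= /andP [_]; rewrite all_cat => /andP [].
- by [].
- exact: phi_LN E.
Qed.

Lemma ncl_nc s : ncl s <-> noncrossing (map lleaves s).
Proof.
split.
  move=> N B1 B2 /mapP [X hX ->] /mapP [Y hY ->]; exact: N.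
move=> N X Y hX hY; apply: N; exact: map_f.
Qed.

Lemma Forall_TU cs : List.Forall TU cs.
Proof. by elim: cs => [|c cs IH]; constructor => //; exact: TU_all. Qed.

Theorem mainTheorem4 (n : nat) (hn : 1 <= n) :
  (forall t, PST n t -> inA n (phi t)) /\
  (forall t1 t2, PST n t1 -> PST n t2 -> perm_eq (phi t1) (phi t2) -> t1 = t2) /\
  (forall a, inA n a -> exists2 t, PST n t & perm_eq (phi t) a).
Proof.
split; [|split].
- move=> t /glue [cs [E rcs Ecs P]].
  have [i pl nc] := FPs (Forall_FP cs) rcs Ecs.
  split.
  + apply/allP => X hX.
    have hX' : X \in FsL cs by rewrite -(perm_mem P).
    by case: (i X hX').
  + exact: perm_trans (lvsL_perm P) pl.
  + apply/ncl_nc; apply: ncl_perm nc; by rewrite perm_sym.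
- move=> t1 t2 /glue [cs1 [E1 r1 F1 P1]] /glue [cs2 [E2 r2 F2 P2]] P.
  have Ec : cs1 = cs2.
    apply: (SU (Forall_TU cs1) r1 r2 F1 F2).
    rewrite perm_sym in P1; exact: perm_trans P1 (perm_trans P P2).
  have [h1 _ _] := labP t1 1; have [h2 _ _] := labP t2 1.
  by rewrite -h1 -h2 E1 E2 Ec.
- move=> a [As Ap Anc].
  have HA : Arr 1 (1 + n) a.
    split => //.
    + by rewrite /lvsL (perm_uniq Ap) iota_uniq.
    + by move=> x; rewrite /lvsL (perm_mem Ap) mem_iota.
    + by apply/ncl_nc.
  have [_ SEn] := TSE n.
  have [cs [rcs Ecs Pcs]] := SEn 1 n a (leqnn n) HA.
  case: cs rcs Ecs Pcs => [|c cs] rcs Ecs Pcs.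
    by move: Ecs hn => /(congr1 size); rewrite size_iota /= => <-.
  set u := LN ((c :: cs) ++ [:: LL n.+1]).
  have lu : lvs u = iota 1 n.+1.
    by rewrite /u lvs_LN map_cat flatten_cat Ecs -(addn1 n) (iotaD 1 n 1) /= add1n addn1.
  have Lu : lab (lshape u) 1 = (u, 1 + size (lvs u)).
    by apply: lab_uniq; rewrite lu size_iota.
  have [_ hl _] := labP (lshape u) 1.
  have hl' : lvs u = iota 1 (nleaves (lshape u)) by rewrite -hl Lu.
  have nl : nleaves (lshape u) = n.+1 by have := congr1 size hl'; rewrite lu !size_iota.
  exists (lshape u).
  + apply/and3P; split.
    * rewrite -red_shape /u /=; move: rcs => /= /andP [-> hcs].
      by rewrite all_cat hcs /= size_cat addn1.
    * rewrite /prime_tree nl /= map_cat last_cat /=; move: hn; clia.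
    * by rewrite /weight nl.
  + apply: perm_trans _ Pcs; apply: (phi_LN (k := n.+1)); by rewrite Lu.
Qed.
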